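(* For $r\ge1$ let $A_1^r=\{(\alpha_1,\alpha_2,\alpha_3)\in\mathbb{Z}_{\ge0}^3:\alpha_1\le1,\ \alpha_3=0,\ |\alpha|\le r\}$, $A_2^r=\{(\alpha_1,\alpha_2,\alpha_3):\alpha_1\le1,\ \alpha_2=0,\ \alpha_3\ge1,\ |\alpha|\le r\}$ and $\mathcal F_r=A_1^r\cup A_2^r$. Let $f(x|\theta,v,m)$ be the skew-normal kernel. Then for every $\alpha=(\alpha_1,\alpha_2,\alpha_3)\in\mathbb{Z}_{\ge0}^3$ there are polynomials $P^{\kappa}_{\alpha}(m)$, $H^{\kappa}_{\alpha}(m)$, $Q^{\kappa}_{\alpha}(v)$ (indexed by $\kappa$ in the set below), with $H^\kappa_\alpha(m)\ne0$ for $m\neq0$ and $Q^\kappa_\alpha(v)\ne0$ for $v>0$, such that for all $x,\theta\in\mathbb{R}$, $v>0$ and $m\neq0$, $$\frac{\partial^{|\alpha|}f}{\partial\theta^{\alpha_1}\partial v^{\alpha_2}\partial m^{\alpha_3}}=\sum_{\kappa}\frac{P^{\kappa}_{\alpha}(m)}{H^{\kappa}_{\alpha}(m)Q^{\kappa}_{\alpha}(v)}\frac{\partial^{|\kappa|}f}{\partial\theta^{\kappa_1}\partial v^{\kappa_2}\partial m^{\kappa_3}},$$ where the sum ranges over $\kappa\in\mathcal F_{|\alpha|}$ with $\kappa_1+2\kappa_2+2\kappa_3\le\alpha_1+2\alpha_2+2\alpha_3$.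
   Context: Skew-normal kernel: $f(x|\theta,v,m)=\frac{2}{\sigma}\varphi\!\left(\frac{x-\theta}{\sigma}\right)\Phi\!\left(\frac{m(x-\theta)}{\sigma}\right)$ with $\sigma=\sqrt v$, $\varphi,\Phi$ the standard normal density and cdf. $|\alpha|=\alpha_1+\alpha_2+\alpha_3$. *)

(* Defs.v *)
From Stdlib Require Import Reals Lra Lia Arith List ClassicalEpsilon.
Open Scope R_scope.

Definition phi (z : R) : R := / sqrt (2 * PI) * exp (- (z ^ 2) / 2).

Lemma phi_continuity : continuity phi.
Proof.
  unfold phi. intro z.
  apply continuity_pt_mult.
  - apply continuity_pt_const. intros a b; reflexivity.
  - apply (continuity_pt_comp (fun z => - (z ^ 2) / 2) exp).
    + reg.
    + apply derivable_continuous_pt. apply derivable_pt_exp.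
Qed.

Lemma phi_integrable (a b : R) : Riemann_integrable phi a b.
Proof.
  destruct (Rle_dec a b) as [H|H].
  - apply continuity_implies_RiemannInt; [exact H|].
    intros; apply phi_continuity.
  - apply RiemannInt_P1. apply continuity_implies_RiemannInt; [lra|].
    intros; apply phi_continuity.
Qed.

Definition Phi (z : R) : R := / 2 + RiemannInt (phi_integrable 0 z).

Definition skewf (x theta v m : R) : R :=
  2 / sqrt v * phi ((x - theta) / sqrt v) * Phi (m * (x - theta) / sqrt v).

(** Derivative of a one-variable function at a point: the (unique) l with
    derivable_pt_lim g x l, chosen by classical description (when it exists). *)
Definition Dpt (g : R -> R) (x : R) : R :=
  epsilon (inhabits 0) (fun l => derivable_pt_lim g x l).

Definition d_theta (F : R -> R -> R -> R) : R -> R -> R -> R :=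
  fun t v m => Dpt (fun t' => F t' v m) t.
Definition d_v (F : R -> R -> R -> R) : R -> R -> R -> R :=
  fun t v m => Dpt (fun v' => F t v' m) v.
Definition d_m (F : R -> R -> R -> R) : R -> R -> R -> R :=
  fun t v m => Dpt (fun m' => F t v m') m.

Definition pderiv (a1 a2 a3 : nat) (F : R -> R -> R -> R) : R -> R -> R -> R :=
  Nat.iter a1 d_theta (Nat.iter a2 d_v (Nat.iter a3 d_m F)).

(** Univariate real polynomials as coefficient lists (constant term first). *)
Definition rpoly := list R.
Definition peval (p : rpoly) (x : R) : R := fold_right (fun a acc => a + x * acc) 0 p.

Definition inF (r k1 k2 k3 : nat) : bool :=
  (k1 <=? 1)%nat && (k1 + k2 + k3 <=? r)%nat &&
  ((k3 =? 0)%nat || ((k2 =? 0)%nat && (1 <=? k3)%nat)).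

Definition idx (a1 a2 a3 k1 k2 k3 : nat) : bool :=
  inF (a1 + a2 + a3) k1 k2 k3 &&
  (k1 + 2 * k2 + 2 * k3 <=? a1 + 2 * a2 + 2 * a3)%nat.

(** Sum over k1 in 0..1, k2 in 0..r, k3 in 0..r of the terms with idx true
    (this covers all of F_r since |kappa| <= r). *)
Definition idx_sum (a1 a2 a3 : nat) (T : nat -> nat -> nat -> R) : R :=
  let r := (a1 + a2 + a3)%nat in
  sum_f_R0 (fun k1 => sum_f_R0 (fun k2 => sum_f_R0 (fun k3 =>
    if idx a1 a2 a3 k1 k2 k3 then T k1 k2 k3 else 0) r) r) 1.

(* Main.v *)
Require Import Defs.
From Stdlib Require Import Reals.
Open Scope R_scope.
From Stdlib Require Import Lra Lia List Bool FunctionalExtensionality ClassicalEpsilon.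
From Coquelicot Require Import Coquelicot.
Open Scope R_scope.


Lemma phi_cont z : continuous phi z.
Proof. apply continuity_pt_filterlim. apply phi_continuity. Qed.
Lemma Phi_der z : derivable_pt_lim Phi z (phi z).
Proof.
  assert (H: derivable_pt_lim (fun y => RInt phi 0 y) z (phi z)).
  { apply is_derive_Reals. apply is_derive_RInt with (a:=0).
  - apply filter_forall. intro b. apply (@RInt_correct R_CompleteNormedModule phi 0 b). apply (@ex_RInt_continuous R_CompleteNormedModule). intros; apply phi_cont.
  - apply phi_cont. }
  replace (phi z) with (0 + phi z) by ring.
  assert (E: Phi = fun y => /2 + RInt phi 0 y).
  { apply functional_extensionality; intro y. unfold Phi. now rewrite RInt_Reals with (pr := phi_integrable 0 y). }
  rewrite E. apply (derivable_pt_lim_plus (fun _ => /2)). apply derivable_pt_lim_const. exact H.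
Qed.

Definition cst := / sqrt (2 * PI).
Definition EA x t v := exp (- (((x - t) / sqrt v) ^ 2) / 2).
Definition EB x t v m := exp (- ((m * (x - t) / sqrt v) ^ 2) / 2).
Definition PA x t v m := Phi (m * (x - t) / sqrt v).

Lemma exp_der g t l : is_derive g t l -> is_derive (fun y => exp (g y)) t (exp (g t) * l).
Proof.
  intro H. apply is_derive_Reals. apply is_derive_Reals in H.
  apply (derivable_pt_lim_comp g exp). exact H. apply derivable_pt_lim_exp.
Qed.
Lemma Phi_comp_der g t l : is_derive g t l -> is_derive (fun y => Phi (g y)) t (phi (g t) * l).
Proof.
  intro H. apply is_derive_Reals. apply is_derive_Reals in H.
  apply (derivable_pt_lim_comp g Phi). exact H. apply Phi_der.
Qed.

Section Atoms.
Variables (x t v m : R).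
Hypothesis Hv : 0 < v.
Let w := / sqrt v.
Lemma sqrt_ne : sqrt v <> 0.
Proof. apply Rgt_not_eq. apply sqrt_lt_R0. exact Hv. Qed.

Lemma EA_dt : is_derive (fun y => EA x y v) t (EA x t v * ((x - t) * w^2)).
Proof. unfold EA. apply (exp_der (fun y => - (((x - y) / sqrt v) ^ 2) / 2)). pose proof sqrt_ne. auto_derive. auto. unfold w. field. auto. Qed.
Lemma EB_dt : is_derive (fun y => EB x y v m) t (EB x t v m * (m^2 * (x - t) * w^2)).
Proof. unfold EB. apply (exp_der (fun y => - ((m * (x - y) / sqrt v) ^ 2) / 2)). pose proof sqrt_ne. auto_derive. auto. unfold w. field. auto. Qed.
Lemma PA_dt : is_derive (fun y => PA x y v m) t (cst * EB x t v m * (- m * w)).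
Proof. unfold PA. apply (Phi_comp_der (fun y => m * (x - y) / sqrt v)). pose proof sqrt_ne. auto_derive. auto. unfold w, phi, cst, EB. field. auto. Qed.
Lemma EA_dv : is_derive (fun y => EA x t y) v (EA x t v * ((x - t)^2 * w^4 / 2)).
Proof. unfold EA. apply (exp_der (fun y => - (((x - t) / sqrt y) ^ 2) / 2)). pose proof sqrt_ne. auto_derive. auto.
  unfold w. field. auto. Qed.
Lemma EB_dv : is_derive (fun y => EB x t y m) v (EB x t v m * (m^2 * (x - t)^2 * w^4 / 2)).
Proof. unfold EB. apply (exp_der (fun y => - ((m * (x - t) / sqrt y) ^ 2) / 2)). pose proof sqrt_ne. auto_derive. auto.
  unfold w. field. auto. Qed.
Lemma PA_dv : is_derive (fun y => PA x t y m) v (cst * EB x t v m * (- m * (x - t) * w^3 / 2)).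
Proof. unfold PA. apply (Phi_comp_der (fun y => m * (x - t) / sqrt y)). pose proof sqrt_ne. auto_derive. auto. unfold w, phi, cst, EB. field. auto. Qed.
Lemma EA_dm : is_derive (fun y => EA x t v) m 0.
Proof. auto_derive. auto. ring. Qed.
Lemma EB_dm : is_derive (fun y => EB x t v y) m (EB x t v m * (- m * (x - t)^2 * w^2)).
Proof. unfold EB. apply (exp_der (fun y => - ((y * (x - t) / sqrt v) ^ 2) / 2)). pose proof sqrt_ne. auto_derive. auto.
  unfold w. field. auto. Qed.
Lemma PA_dm : is_derive (fun y => PA x t v y) m (cst * EB x t v m * ((x - t) * w)).
Proof. unfold PA. apply (Phi_comp_der (fun y => y * (x - t) / sqrt v)). pose proof sqrt_ne. auto_derive. auto. unfold w, phi, cst, EB. field. auto. Qed.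
End Atoms.


Inductive mono := Mono (c : R) (i j k : nat) (b : bool).
Definition Ker (b : bool) x t v m := if b then EA x t v * PA x t v m else EA x t v * EB x t v m.
Definition evalM x t v m (M : mono) : R :=
  match M with Mono c i j k b => c * m ^ i * (x - t) ^ j * (/ sqrt v) ^ k * Ker b x t v m end.
Definition evalT x t v m (T : list mono) : R := fold_right (fun M acc => evalM x t v m M + acc) 0 T.

Definition DtM (M : mono) : list mono :=
  match M with Mono c i j k b =>
    Mono (- (c * INR j)) i (pred j) k b :: Mono c i (S j) (S (S k)) b ::
    (if b then Mono (- (c * cst)) (S i) j (S k) false :: nil
     else Mono c (S (S i)) (S j) (S (S k)) false :: nil) end.
Definition DvM (M : mono) : list mono :=
  match M with Mono c i j k b =>
    Mono (- (c * INR k / 2)) i j (S (S k)) b :: Mono (c / 2) i (S (S j)) (S (S (S (S k)))) b ::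
    (if b then Mono (- (c * cst / 2)) (S i) (S j) (S (S (S k))) false :: nil
     else Mono (c / 2) (S (S i)) (S (S j)) (S (S (S (S k)))) false :: nil) end.
Definition DmM (M : mono) : list mono :=
  match M with Mono c i j k b =>
    Mono (c * INR i) (pred i) j k b ::
    (if b then Mono (c * cst) i (S j) (S k) false :: nil
     else Mono (- c) (S i) (S (S j)) (S (S k)) false :: nil) end.
Definition Dt (T : list mono) := flat_map DtM T.
Definition Dv (T : list mono) := flat_map DvM T.
Definition Dm (T : list mono) := flat_map DmM T.

Lemma evalT_app x t v m A B : evalT x t v m (A ++ B) = evalT x t v m A + evalT x t v m B.
Proof. induction A; simpl. ring. rewrite IHA. ring. Qed.

Lemma Der_EA_t x t v : 0 < v -> Derive (fun y => EA x y v) t = EA x t v * ((x - t) * (/ sqrt v)^2).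
Proof. intro. apply is_derive_unique. now apply EA_dt. Qed.
Lemma Der_EB_t x t v m : 0 < v -> Derive (fun y => EB x y v m) t = EB x t v m * (m^2 * (x - t) * (/ sqrt v)^2).
Proof. intro. apply is_derive_unique. now apply EB_dt. Qed.
Lemma Der_PA_t x t v m : 0 < v -> Derive (fun y => PA x y v m) t = cst * EB x t v m * (- m * / sqrt v).
Proof. intro. apply is_derive_unique. now apply PA_dt. Qed.
Lemma Der_EA_v x t v : 0 < v -> Derive (fun y => EA x t y) v = EA x t v * ((x - t)^2 * (/ sqrt v)^4 / 2).
Proof. intro. apply is_derive_unique. now apply EA_dv. Qed.
Lemma Der_EB_v x t v m : 0 < v -> Derive (fun y => EB x t y m) v = EB x t v m * (m^2 * (x - t)^2 * (/ sqrt v)^4 / 2).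
Proof. intro. apply is_derive_unique. now apply EB_dv. Qed.
Lemma Der_PA_v x t v m : 0 < v -> Derive (fun y => PA x t y m) v = cst * EB x t v m * (- m * (x - t) * (/ sqrt v)^3 / 2).
Proof. intro. apply is_derive_unique. now apply PA_dv. Qed.
Lemma Der_EB_m x t v m : 0 < v -> Derive (fun y => EB x t v y) m = EB x t v m * (- m * (x - t)^2 * (/ sqrt v)^2).
Proof. intro. apply is_derive_unique. now apply EB_dm. Qed.
Lemma Der_PA_m x t v m : 0 < v -> Derive (fun y => PA x t v y) m = cst * EB x t v m * ((x - t) * / sqrt v).
Proof. intro. apply is_derive_unique. now apply PA_dm. Qed.

Lemma Dt_monoM x t v m M : 0 < v ->
  derivable_pt_lim (fun y => evalM x y v m M) t (evalT x t v m (DtM M)).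
Proof.
  intro Hv. apply is_derive_Reals. pose proof (sqrt_ne v Hv) as Hs. destruct M as [c i j k b]. simpl.
  destruct b; simpl Ker.
  - auto_derive. repeat split; eexists; [apply EA_dt|apply PA_dt]; auto.
    rewrite Der_EA_t, Der_PA_t by auto.
    replace (x + - t) with (x - t) by ring.
    destruct j; simpl; rewrite ?S_INR; field; auto.
  - auto_derive. repeat split; eexists; [apply EA_dt|apply EB_dt]; auto.
    rewrite Der_EA_t, Der_EB_t by auto.
    replace (x + - t) with (x - t) by ring.
    destruct j; simpl; rewrite ?S_INR; field; auto.
Qed.

Lemma Dv_monoM x t v m M : 0 < v ->
  derivable_pt_lim (fun y => evalM x t y m M) v (evalT x t v m (DvM M)).
Proof.
  intro Hv. apply is_derive_Reals. pose proof (sqrt_ne v Hv) as Hs. destruct M as [c i j k b]. simpl.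
  destruct b; simpl Ker.
  - auto_derive. repeat split; auto; eexists; [apply EA_dv|apply PA_dv]; auto.
    rewrite Der_EA_v, Der_PA_v by auto.
    destruct k; simpl; rewrite ?S_INR; field; auto.
  - auto_derive. repeat split; auto; eexists; [apply EA_dv|apply EB_dv]; auto.
    rewrite Der_EA_v, Der_EB_v by auto.
    destruct k; simpl; rewrite ?S_INR; field; auto.
Qed.

Lemma Dm_monoM x t v m M : 0 < v ->
  derivable_pt_lim (fun y => evalM x t v y M) m (evalT x t v m (DmM M)).
Proof.
  intro Hv. apply is_derive_Reals. pose proof (sqrt_ne v Hv) as Hs. destruct M as [c i j k b]. simpl.
  destruct b; simpl Ker.
  - auto_derive. repeat split; auto; eexists; apply PA_dm; auto.
    rewrite Der_PA_m by auto.
    destruct i; simpl; rewrite ?S_INR; field; auto.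
  - auto_derive. repeat split; auto; eexists; apply EB_dm; auto.
    rewrite Der_EB_m by auto.
    destruct i; simpl; rewrite ?S_INR; field; auto.
Qed.

Lemma Dt_app A B : Dt (A ++ B) = Dt A ++ Dt B.
Proof. unfold Dt. apply flat_map_app. Qed.
Lemma Dv_app A B : Dv (A ++ B) = Dv A ++ Dv B.
Proof. unfold Dv. apply flat_map_app. Qed.
Lemma Dm_app A B : Dm (A ++ B) = Dm A ++ Dm B.
Proof. unfold Dm. apply flat_map_app. Qed.

Lemma comm_tv_M x t v m M : 0 < v -> evalT x t v m (Dt (DvM M)) = evalT x t v m (Dv (DtM M)).
Proof.
  intro Hv. pose proof (sqrt_ne v Hv) as Hs. destruct M as [c i j k b].
  destruct b, j, k; simpl; rewrite ?S_INR; field; auto.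
Qed.
Lemma comm_tm_M x t v m M : 0 < v -> evalT x t v m (Dt (DmM M)) = evalT x t v m (Dm (DtM M)).
Proof.
  intro Hv. pose proof (sqrt_ne v Hv) as Hs. destruct M as [c i j k b].
  destruct b, i, j; simpl; rewrite ?S_INR; field; auto.
Qed.
Lemma comm_vm_M x t v m M : 0 < v -> evalT x t v m (Dv (DmM M)) = evalT x t v m (Dm (DvM M)).
Proof.
  intro Hv. pose proof (sqrt_ne v Hv) as Hs. destruct M as [c i j k b].
  destruct b, i, k; simpl; rewrite ?S_INR; field; auto.
Qed.

Lemma Dt_T x t v m T : 0 < v -> derivable_pt_lim (fun y => evalT x y v m T) t (evalT x t v m (Dt T)).
Proof.
  intro Hv. induction T as [|M T IH]; simpl.
  - apply derivable_pt_lim_const.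
  - change (flat_map DtM T) with (Dt T). rewrite evalT_app.
    apply (derivable_pt_lim_plus (fun y => evalM x y v m M) (fun y => evalT x y v m T)).
    now apply Dt_monoM. exact IH.
Qed.
Lemma Dv_T x t v m T : 0 < v -> derivable_pt_lim (fun y => evalT x t y m T) v (evalT x t v m (Dv T)).
Proof.
  intro Hv. induction T as [|M T IH]; simpl.
  - apply derivable_pt_lim_const.
  - change (flat_map DvM T) with (Dv T). rewrite evalT_app.
    apply (derivable_pt_lim_plus (fun y => evalM x t y m M) (fun y => evalT x t y m T)).
    now apply Dv_monoM. exact IH.
Qed.
Lemma Dm_T x t v m T : 0 < v -> derivable_pt_lim (fun y => evalT x t v y T) m (evalT x t v m (Dm T)).
Proof.
  intro Hv. induction T as [|M T IH]; simpl.
  - apply derivable_pt_lim_const.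
  - change (flat_map DmM T) with (Dm T). rewrite evalT_app.
    apply (derivable_pt_lim_plus (fun y => evalM x t v y M) (fun y => evalT x t v y T)).
    now apply Dm_monoM. exact IH.
Qed.

Lemma comm_tv x t v m T : 0 < v -> evalT x t v m (Dt (Dv T)) = evalT x t v m (Dv (Dt T)).
Proof.
  intro Hv. induction T as [|M T IH]; simpl. reflexivity.
  change (flat_map DvM T) with (Dv T). change (flat_map DtM T) with (Dt T).
  rewrite Dt_app, Dv_app, !evalT_app, IH, comm_tv_M; auto.
Qed.
Lemma comm_tm x t v m T : 0 < v -> evalT x t v m (Dt (Dm T)) = evalT x t v m (Dm (Dt T)).
Proof.
  intro Hv. induction T as [|M T IH]; simpl. reflexivity.
  change (flat_map DmM T) with (Dm T). change (flat_map DtM T) with (Dt T).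
  rewrite Dt_app, Dm_app, !evalT_app, IH, comm_tm_M; auto.
Qed.
Lemma comm_vm x t v m T : 0 < v -> evalT x t v m (Dv (Dm T)) = evalT x t v m (Dm (Dv T)).
Proof.
  intro Hv. induction T as [|M T IH]; simpl. reflexivity.
  change (flat_map DmM T) with (Dm T). change (flat_map DvM T) with (Dv T).
  rewrite Dv_app, Dm_app, !evalT_app, IH, comm_vm_M; auto.
Qed.

Lemma Dpt_eq g y l : derivable_pt_lim g y l -> Dpt g y = l.
Proof.
  intro H. unfold Dpt. apply (uniqueness_limite g y).
  - apply epsilon_spec. exists l. exact H.
  - exact H.
Qed.

Lemma loc_der f g y l d : 0 < d -> (forall z, Rabs (z - y) < d -> f z = g z) ->
  derivable_pt_lim f y l -> derivable_pt_lim g y l.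
Proof.
  intros Hd E H eps Heps. destruct (H eps Heps) as [del Hdel].
  assert (Hm : 0 < Rmin del d) by (apply Rmin_pos; [apply cond_pos|lra]).
  exists (mkposreal _ Hm). intros h Hh Hah. simpl in Hah.
  rewrite <- !E. apply Hdel; auto. eapply Rlt_le_trans; [exact Hah|apply Rmin_l].
  replace (y - y) with 0 by ring. rewrite Rabs_R0. lra.
  replace (y + h - y) with h by ring. eapply Rlt_le_trans; [exact Hah|apply Rmin_r].
Qed.

Definition EqD (T1 T2 : list mono) := forall x t v m, 0 < v -> m <> 0 -> evalT x t v m T1 = evalT x t v m T2.

Lemma EqD_Dt T1 T2 : EqD T1 T2 -> EqD (Dt T1) (Dt T2).
Proof.
  intros E x t v m Hv Hm.
  apply (uniqueness_limite (fun y => evalT x y v m T1) t). now apply Dt_T.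
  apply (loc_der (fun y => evalT x y v m T2) (fun y => evalT x y v m T1) _ _ 1). lra. intros; symmetry; apply E; auto.
  now apply Dt_T.
Qed.
Lemma EqD_Dv T1 T2 : EqD T1 T2 -> EqD (Dv T1) (Dv T2).
Proof.
  intros E x t v m Hv Hm.
  apply (uniqueness_limite (fun y => evalT x t y m T1) v). now apply Dv_T.
  apply (loc_der (fun y => evalT x t y m T2) (fun y => evalT x t y m T1) _ _ v). lra.
  intros z Hz; symmetry; apply E; auto. apply Rabs_def2 in Hz. lra.
  now apply Dv_T.
Qed.
Lemma EqD_Dm T1 T2 : EqD T1 T2 -> EqD (Dm T1) (Dm T2).
Proof.
  intros E x t v m Hv Hm.
  apply (uniqueness_limite (fun y => evalT x t v y T1) m). now apply Dm_T.
  apply (loc_der (fun y => evalT x t v y T2) (fun y => evalT x t v y T1) _ _ (Rabs m)). now apply Rabs_pos_lt.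
  intros z Hz; symmetry; apply E; auto. intro Z. subst z. rewrite Rminus_0_l, Rabs_Ropp in Hz. lra.
  now apply Dm_T.
Qed.


Fixpoint padd (p q : rpoly) : rpoly :=
  match p, q with
  | nil, _ => q
  | _, nil => p
  | a :: p', b :: q' => (a + b) :: padd p' q'
  end.
Definition pscale (c : R) (p : rpoly) : rpoly := map (Rmult c) p.
Fixpoint pmul (p q : rpoly) : rpoly :=
  match p with nil => nil | a :: p' => padd (pscale a q) (0 :: pmul p' q) end.
Fixpoint pder (p : rpoly) : rpoly :=
  match p with nil => nil | a :: p' => padd p' (0 :: pder p') end.

Lemma peval_cons a p y : peval (a :: p) y = a + y * peval p y.
Proof. reflexivity. Qed.
Lemma peval_add p q y : peval (padd p q) y = peval p y + peval q y.
Proof.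
  revert q; induction p as [|a p IH]; intros [|b q]; simpl; try ring.
  rewrite IH. ring.
Qed.
Lemma peval_scale c p y : peval (pscale c p) y = c * peval p y.
Proof. induction p as [|a p IH]; simpl. ring. rewrite IH. ring. Qed.
Lemma peval_mul p q y : peval (pmul p q) y = peval p y * peval q y.
Proof.
  induction p as [|a p IH]; simpl. ring.
  rewrite peval_add, peval_scale, peval_cons, IH. ring.
Qed.
Lemma peval_der p y : derivable_pt_lim (fun z => peval p z) y (peval (pder p) y).
Proof.
  induction p as [|a p IH]; simpl.
  - apply derivable_pt_lim_const.
  - rewrite peval_add, peval_cons.
    replace (peval p y + (0 + y * peval (pder p) y)) with (0 + (1 * peval p y + y * peval (pder p) y)) by ring.
    apply (derivable_pt_lim_plus (fun _ => a) (fun z => z * peval p z)).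
    apply derivable_pt_lim_const.
    apply (derivable_pt_lim_mult (fun z => z) (fun z => peval p z)). apply derivable_pt_lim_id. exact IH.
Qed.

Definition Qpoly (d : nat) : rpoly := repeat 0 d ++ (1 :: nil).
Lemma peval_Qpoly d y : peval (Qpoly d) y = y ^ d.
Proof. induction d; simpl. ring. unfold Qpoly in IHd. rewrite IHd. ring. Qed.


Definition t0 : list mono := Mono (2 * cst) 0 0 1 true :: nil.
Definition Tk k1 k2 k3 := Nat.iter k1 Dt (Nat.iter k2 Dv (Nat.iter k3 Dm t0)).

Inductive entry := En (k1 k2 k3 : nat) (P H : rpoly) (d : nat).
Definition cval P H d v m := peval P m / peval H m * (/ v) ^ d.
Definition evalE x t v m en :=
  match en with En k1 k2 k3 P H d => cval P H d v m * evalT x t v m (Tk k1 k2 k3) end.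
Definition evalL x t v m L := fold_right (fun en acc => evalE x t v m en + acc) 0 L.

Definition idxg r w k1 k2 k3 := inF r k1 k2 k3 && (k1 + 2 * k2 + 2 * k3 <=? w)%nat.

Lemma idxg_spec r w k1 k2 k3 : idxg r w k1 k2 k3 = true <->
  ((k1 <= 1)%nat /\ (k1 + k2 + k3 <= r)%nat /\ (k3 = 0 \/ (k2 = 0 /\ 1 <= k3))%nat /\ (k1 + 2*k2 + 2*k3 <= w)%nat).
Proof.
  unfold idxg, inF. rewrite !andb_true_iff, orb_true_iff, andb_true_iff, !Nat.leb_le, !Nat.eqb_eq.
  tauto.
Qed.

Definition good (S : nat -> nat -> nat -> Prop) r w e en :=
  match en with En k1 k2 k3 P H d =>
    S k1 k2 k3 /\ idxg r w k1 k2 k3 = true /\ (2 * d + k1 + 2 * k2 = e)%nat /\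
    (forall m, m <> 0 -> peval H m <> 0) end.

Definition Rep S r w e T := exists L, List.Forall (good S r w e) L /\
  forall x t v m, 0 < v -> m <> 0 -> evalT x t v m T = evalL x t v m L.

Lemma evalL_app x t v m A B : evalL x t v m (A ++ B) = evalL x t v m A + evalL x t v m B.
Proof. induction A; simpl. ring. rewrite IHA. ring. Qed.

Definition scaleL P H d L := map (fun en => match en with En a b c P' H' d' =>
  En a b c (pmul P P') (pmul H H') (d + d') end) L.

Lemma cval_mul P H d P' H' d' v m : cval (pmul P P') (pmul H H') (d + d') v m = cval P H d v m * cval P' H' d' v m.
Proof. unfold cval. rewrite !peval_mul, pow_add. unfold Rdiv. rewrite Rinv_mult. ring. Qed.

Lemma evalL_scale x t v m P H d L : evalL x t v m (scaleL P H d L) = cval P H d v m * evalL x t v m L.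
Proof.
  induction L as [|[a b c P' H' d'] L IH]; simpl. ring.
  rewrite IH, cval_mul. ring.
Qed.

Lemma good_mono S S' r w e r' w' en : good S r w e en -> (r <= r')%nat -> (w <= w')%nat ->
  (forall a b c, S a b c -> S' a b c) -> good S' r' w' e en.
Proof.
  destruct en as [a b c P H d]; simpl. intros (HS & Hi & He & HH) Hr Hw HSS.
  rewrite idxg_spec in *. repeat split; auto; lia.
Qed.

Lemma Forall_good_scale S r w e P H d L : (forall m, m <> 0 -> peval H m <> 0) ->
  List.Forall (good S r w e) L -> List.Forall (good S r w (2 * d + e)) (scaleL P H d L).
Proof.
  intros HH F. induction F as [|[a b c P' H' d'] L G F IH]; simpl; constructor; auto.
  simpl in *. destruct G as (HS & Hi & He & HH'). split; [exact HS|split; [exact Hi|split; [lia|]]].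
  intros m Hm. rewrite peval_mul. apply Rmult_integral_contrapositive. split; auto.
Qed.

Lemma Rep_ext S r w e T1 T2 : EqD T1 T2 -> Rep S r w e T1 -> Rep S r w e T2.
Proof.
  intros E [L [F H]]. exists L. split; auto. intros. rewrite <- E; auto.
Qed.

Lemma Rep_mono S S' r w e r' w' T : Rep S r w e T -> (r <= r')%nat -> (w <= w')%nat ->
  (forall a b c, S a b c -> S' a b c) -> Rep S' r' w' e T.
Proof.
  intros [L [F H]] Hr Hw HS. exists L. split; auto.
  eapply List.Forall_impl; [|exact F]. intros. eapply good_mono; eauto.
Qed.

Lemma Rep_single (S : nat -> nat -> nat -> Prop) r w e k1 k2 k3 : S k1 k2 k3 -> idxg r w k1 k2 k3 = true ->
  (k1 + 2 * k2 = e)%nat -> Rep S r w e (Tk k1 k2 k3).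
Proof.
  intros HS Hi He. exists (En k1 k2 k3 (1 :: nil) (1 :: nil) 0 :: nil). split.
  - constructor; [|constructor]. simpl. split; [exact HS|split; [exact Hi|split; [lia|]]]. intros; simpl; lra.
  - intros. simpl. unfold cval. simpl. field.
Qed.

Lemma good_inF S r w e k1 k2 k3 P H d : good S r w e (En k1 k2 k3 P H d) ->
  inF (k1 + k2 + k3) k1 k2 k3 = true.
Proof.
  simpl. intros (_ & Hi & _). unfold idxg in Hi. apply andb_prop in Hi. destruct Hi as [Hi _].
  unfold inF in *. rewrite !andb_true_iff in *. rewrite Nat.leb_le in *. intuition.
  apply Nat.leb_le. lia.
Qed.

Lemma dscal f a y l : derivable_pt_lim f y l -> derivable_pt_lim (fun z => a * f z) y (a * l).
Proof. apply derivable_pt_lim_scal. Qed.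

Lemma scale_good Sp r w e P H d Lk r0 w0 e0 :
  (forall m, m <> 0 -> peval H m <> 0) ->
  List.Forall (good Sp r0 w0 e0) Lk -> (2 * d + e0 = e)%nat -> (r0 <= r)%nat -> (w0 <= w)%nat ->
  List.Forall (good Sp r w e) (scaleL P H d Lk).
Proof.
  intros HH F He Hr Hw. rewrite <- He. eapply List.Forall_impl; [|apply Forall_good_scale; eauto].
  intros. eapply good_mono; eauto.
Qed.

Lemma dscal_r f a y l : derivable_pt_lim f y l -> derivable_pt_lim (fun z => f z * a) y (l * a).
Proof.
  intro H. replace (l * a) with (l * a + f y * 0) by ring.
  apply (derivable_pt_lim_mult f (fun _ => a)). exact H. apply derivable_pt_lim_const.
Qed.

Section Clos.
Variables (Sp Sp' : nat -> nat -> nat -> Prop).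
Hypothesis HSS : forall a b c, Sp a b c -> Sp' a b c.

Lemma clos_t_aux r w e
  (HP : forall k1 k2 k3, Sp k1 k2 k3 -> inF (k1+k2+k3) k1 k2 k3 = true ->
     Rep Sp' (S (k1+k2+k3)) (S (k1+2*k2+2*k3)) (S (k1+2*k2)) (Dt (Tk k1 k2 k3))) L :
  List.Forall (good Sp r w e) L -> exists L', List.Forall (good Sp' (S r) (S w) (S e)) L' /\
   forall x t v m, 0 < v -> m <> 0 -> derivable_pt_lim (fun y => evalL x y v m L) t (evalL x t v m L').
Proof.
  intro F. induction F as [|[a b c P H d] L G F IH].
  - exists nil. split. constructor. intros. simpl. apply derivable_pt_lim_const.
  - destruct IH as [L' [F' D']].
    pose proof G as G'. simpl in G'. destruct G' as (HS & Hi & He & HH).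
    apply idxg_spec in Hi.
    destruct (HP a b c HS (good_inF _ _ _ _ _ _ _ _ _ _ G)) as [Lk [Fk Ek]].
    exists (scaleL P H d Lk ++ L'). split.
    + apply Forall_app. split; auto. eapply scale_good; eauto; lia.
    + intros x t v m Hv Hm. simpl. rewrite evalL_app, evalL_scale, <- Ek by auto.
      apply (derivable_pt_lim_plus (fun y => evalE x y v m (En a b c P H d)) (fun y => evalL x y v m L)); auto.
      simpl. apply dscal. now apply Dt_T.
Qed.

Lemma clos_t r w e T
  (HP : forall k1 k2 k3, Sp k1 k2 k3 -> inF (k1+k2+k3) k1 k2 k3 = true ->
     Rep Sp' (S (k1+k2+k3)) (S (k1+2*k2+2*k3)) (S (k1+2*k2)) (Dt (Tk k1 k2 k3))) :
  Rep Sp r w e T -> Rep Sp' (S r) (S w) (S e) (Dt T).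
Proof.
  intros [L [F E]]. destruct (clos_t_aux r w e HP L F) as [L' [F' D']].
  exists L'. split; auto. intros x t v m Hv Hm.
  apply (uniqueness_limite (fun y => evalT x y v m T) t). now apply Dt_T.
  apply (loc_der (fun y => evalL x y v m L) (fun y => evalT x y v m T) _ _ 1). lra.
  intros; symmetry; apply E; auto. auto.
Qed.

Lemma inv_pow_der d v : v <> 0 -> derivable_pt_lim (fun y => (/ y) ^ d) v (- INR d * (/ v) ^ (S d)).
Proof.
  intro Hv. apply is_derive_Reals. auto_derive. auto.
  destruct d; simpl; rewrite ?S_INR; field; auto.
Qed.

Lemma clos_v_aux r w e
  (HP : forall k1 k2 k3, Sp k1 k2 k3 -> inF (k1+k2+k3) k1 k2 k3 = true ->
     Rep Sp' (S (k1+k2+k3)) (S (S (k1+2*k2+2*k3))) (S (S (k1+2*k2))) (Dv (Tk k1 k2 k3))) L :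
  List.Forall (good Sp r w e) L -> exists L', List.Forall (good Sp' (S r) (S (S w)) (S (S e))) L' /\
   forall x t v m, 0 < v -> m <> 0 -> derivable_pt_lim (fun y => evalL x t y m L) v (evalL x t v m L').
Proof.
  intro F. induction F as [|[a b c P H d] L G F IH].
  - exists nil. split. constructor. intros. simpl. apply derivable_pt_lim_const.
  - destruct IH as [L' [F' D']].
    pose proof G as G'. simpl in G'. destruct G' as (HS & Hi & He & HH).
    pose proof Hi as Hi'. apply idxg_spec in Hi'.
    destruct (HP a b c HS (good_inF _ _ _ _ _ _ _ _ _ _ G)) as [Lk [Fk Ek]].
    exists (En a b c (pscale (- INR d) P) H (S d) :: scaleL P H d Lk ++ L'). split.
    + constructor.
      * simpl. split; [auto|split; [|split; [lia|auto]]]. apply idxg_spec. lia.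
      * apply Forall_app. split; auto. eapply scale_good; eauto; lia.
    + intros x t v m Hv Hm. simpl. rewrite evalL_app, evalL_scale, <- Ek by auto.
      replace (cval (pscale (- INR d) P) H (S d) v m * evalT x t v m (Tk a b c) +
        (cval P H d v m * evalT x t v m (Dv (Tk a b c)) + evalL x t v m L'))
      with ((peval P m / peval H m * (- INR d * (/ v) ^ (S d)) * evalT x t v m (Tk a b c) +
             cval P H d v m * evalT x t v m (Dv (Tk a b c))) + evalL x t v m L').
      2:{ unfold cval. rewrite peval_scale. unfold Rdiv. ring. }
      apply (derivable_pt_lim_plus (fun y => evalE x t y m (En a b c P H d)) (fun y => evalL x t y m L)); auto.
      simpl. apply (derivable_pt_lim_mult (fun y => cval P H d y m) (fun y => evalT x t y m (Tk a b c))).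
      unfold cval. apply dscal. apply inv_pow_der. lra.
      now apply Dv_T.
Qed.

Lemma clos_v r w e T
  (HP : forall k1 k2 k3, Sp k1 k2 k3 -> inF (k1+k2+k3) k1 k2 k3 = true ->
     Rep Sp' (S (k1+k2+k3)) (S (S (k1+2*k2+2*k3))) (S (S (k1+2*k2))) (Dv (Tk k1 k2 k3))) :
  Rep Sp r w e T -> Rep Sp' (S r) (S (S w)) (S (S e)) (Dv T).
Proof.
  intros [L [F E]]. destruct (clos_v_aux r w e HP L F) as [L' [F' D']].
  exists L'. split; auto. intros x t v m Hv Hm.
  apply (uniqueness_limite (fun y => evalT x t y m T) v). now apply Dv_T.
  apply (loc_der (fun y => evalL x t y m L) (fun y => evalT x t y m T) _ _ v). lra.
  intros z Hz; symmetry; apply E; auto. apply Rabs_def2 in Hz. lra. auto.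
Qed.

Lemma clos_m_aux r w e
  (HP : forall k1 k2 k3, Sp k1 k2 k3 -> inF (k1+k2+k3) k1 k2 k3 = true ->
     Rep Sp' (S (k1+k2+k3)) (S (S (k1+2*k2+2*k3))) (k1+2*k2) (Dm (Tk k1 k2 k3))) L :
  List.Forall (good Sp r w e) L -> exists L', List.Forall (good Sp' (S r) (S (S w)) e) L' /\
   forall x t v m, 0 < v -> m <> 0 -> derivable_pt_lim (fun y => evalL x t v y L) m (evalL x t v m L').
Proof.
  intro F. induction F as [|[a b c P H d] L G F IH].
  - exists nil. split. constructor. intros. simpl. apply derivable_pt_lim_const.
  - destruct IH as [L' [F' D']].
    pose proof G as G'. simpl in G'. destruct G' as (HS & Hi & He & HH).
    pose proof Hi as Hi'. apply idxg_spec in Hi'.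
    destruct (HP a b c HS (good_inF _ _ _ _ _ _ _ _ _ _ G)) as [Lk [Fk Ek]].
    exists (En a b c (padd (pmul (pder P) H) (pscale (-1) (pmul P (pder H)))) (pmul H H) d :: scaleL P H d Lk ++ L'). split.
    + constructor.
      * simpl. split; [auto|split; [|split; [lia|]]]. apply idxg_spec. lia.
        intros m Hm. rewrite peval_mul. apply Rmult_integral_contrapositive; auto.
      * apply Forall_app. split; auto. eapply scale_good; eauto; lia.
    + intros x t v m Hv Hm. simpl. rewrite evalL_app, evalL_scale, <- Ek by auto.
      pose proof (HH m Hm) as Hm'.
      replace (cval (padd (pmul (pder P) H) (pscale (-1) (pmul P (pder H)))) (pmul H H) d v m * evalT x t v m (Tk a b c) +
        (cval P H d v m * evalT x t v m (Dm (Tk a b c)) + evalL x t v m L'))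
      with ((((peval (pder P) m * peval H m - peval (pder H) m * peval P m) / (peval H m)²) * (/ v) ^ d * evalT x t v m (Tk a b c) +
             cval P H d v m * evalT x t v m (Dm (Tk a b c))) + evalL x t v m L').
      2:{ unfold cval. rewrite peval_add, peval_scale, !peval_mul. unfold Rsqr. field. auto. }
      apply (derivable_pt_lim_plus (fun y => evalE x t v y (En a b c P H d)) (fun y => evalL x t v y L)); auto.
      simpl. apply (derivable_pt_lim_mult (fun y => cval P H d v y) (fun y => evalT x t v y (Tk a b c))).
      unfold cval.
      apply (dscal_r (fun y => peval P y / peval H y)).
      apply (derivable_pt_lim_div (fun y => peval P y) (fun y => peval H y)); auto; apply peval_der.
      now apply Dm_T.
Qed.

Lemma clos_m r w e T
  (HP : forall k1 k2 k3, Sp k1 k2 k3 -> inF (k1+k2+k3) k1 k2 k3 = true ->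
     Rep Sp' (S (k1+k2+k3)) (S (S (k1+2*k2+2*k3))) (k1+2*k2) (Dm (Tk k1 k2 k3))) :
  Rep Sp r w e T -> Rep Sp' (S r) (S (S w)) e (Dm T).
Proof.
  intros [L [F E]]. destruct (clos_m_aux r w e HP L F) as [L' [F' D']].
  exists L'. split; auto. intros x t v m Hv Hm.
  apply (uniqueness_limite (fun y => evalT x t v y T) m). now apply Dm_T.
  apply (loc_der (fun y => evalL x t v y L) (fun y => evalT x t v y T) _ _ (Rabs m)). now apply Rabs_pos_lt.
  intros z Hz; symmetry; apply E; auto. intro Z. subst z. rewrite Rminus_0_l, Rabs_Ropp in Hz. lra. auto.
Qed.
End Clos.


Definition S0 (a b c : nat) : Prop := a = 0%nat.
Definition Sc (a b c : nat) : Prop := a = 0%nat /\ b = 0%nat.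
Definition Sall (a b c : nat) : Prop := True.

Lemma inv_v v : 0 < v -> / v = / sqrt v * / sqrt v.
Proof. intro. rewrite <- Rinv_mult, sqrt_sqrt; lra. Qed.

Ltac goodtac := repeat constructor; simpl; try reflexivity;
  intros m0 Hm0; rewrite ?Rmult_0_r, ?Rplus_0_r, ?Rplus_0_l, ?Rmult_1_r; try lra;
  apply Rmult_integral_contrapositive; lra.

Lemma R1 : Rep S0 2 2 2 (Dt (Dt t0)).
Proof.
  exists (En 0 1 0 (2 :: nil) (1 :: nil) 0 :: En 0 0 1 (0 :: -1 :: 0 :: -1 :: nil) (1 :: nil) 1 :: nil).
  split.
  - goodtac.
  - intros x t v m Hv Hm. pose proof (sqrt_ne v Hv). simpl. unfold cval. simpl. rewrite (inv_v v Hv).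
    field; auto.
Qed.

Lemma R2 : Rep Sc 2 4 2 (Dv (Dm t0)).
Proof.
  exists (En 0 0 2 (-1 :: 0 :: -1 :: nil) (0 :: 2 :: nil) 1 :: En 0 0 1 (-1 :: nil) (1 :: nil) 1 :: nil).
  split.
  - goodtac.
  - intros x t v m Hv Hm. pose proof (sqrt_ne v Hv). simpl. unfold cval. simpl. rewrite (inv_v v Hv).
    field; auto.
Qed.

Lemma Rep_cast Sp r w e r' w' e' T : (r <= r')%nat -> (w <= w')%nat -> e = e' ->
  Rep Sp r w e T -> Rep Sp r' w' e' T.
Proof. intros Hr Hw He H. subst e'. eapply Rep_mono; eauto. Qed.

Lemma Rep_gen Sp Sp' r w e r' w' e' T : Rep Sp r w e T -> (r <= r')%nat -> (w <= w')%nat -> e = e' ->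
  (forall a b c, Sp a b c -> Sp' a b c) -> Rep Sp' r' w' e' T.
Proof. intros H Hr Hw He HS. subst e'. eapply Rep_mono; eauto. Qed.
Ltac castr H := apply (Rep_gen _ _ _ _ _ _ _ _ _ H); try lia; try (intros; exact I).

Lemma inF_cases k1 k2 k3 : inF (k1 + k2 + k3) k1 k2 k3 = true ->
  (k1 <= 1)%nat /\ (k3 = 0 \/ (k2 = 0 /\ 1 <= k3))%nat.
Proof.
  unfold inF. rewrite !andb_true_iff, orb_true_iff, andb_true_iff, !Nat.leb_le, !Nat.eqb_eq. tauto.
Qed.

Lemma EqD_sym T1 T2 : EqD T1 T2 -> EqD T2 T1.
Proof. intros E x t v m Hv Hm. symmetry. auto. Qed.
Lemma EqD_trans T1 T2 T3 : EqD T1 T2 -> EqD T2 T3 -> EqD T1 T3.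
Proof. intros E F x t v m Hv Hm. rewrite E; auto. Qed.
Lemma EqD_tv T : EqD (Dt (Dv T)) (Dv (Dt T)).
Proof. intros x t v m Hv Hm. now apply comm_tv. Qed.
Lemma EqD_tm T : EqD (Dt (Dm T)) (Dm (Dt T)).
Proof. intros x t v m Hv Hm. now apply comm_tm. Qed.
Lemma EqD_vm T : EqD (Dv (Dm T)) (Dm (Dv T)).
Proof. intros x t v m Hv Hm. now apply comm_vm. Qed.

Lemma HPm_c : forall k1 k2 k3, Sc k1 k2 k3 -> inF (k1+k2+k3) k1 k2 k3 = true ->
  Rep Sc (S (k1+k2+k3)) (S (S (k1+2*k2+2*k3))) (k1+2*k2) (Dm (Tk k1 k2 k3)).
Proof.
  intros k1 k2 k3 [-> ->] _. apply (Rep_single Sc _ _ _ 0 0 (S k3)).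
  split; reflexivity. apply idxg_spec. lia. lia.
Qed.

Lemma X3 k : Rep Sc (S (S k)) (2 * k + 4) 2 (Dv (Tk 0 0 (S k))).
Proof.
  induction k.
  - exact R2.
  - apply (Rep_ext _ _ _ _ (Dm (Dv (Tk 0 0 (S k))))).
    + apply EqD_sym. apply EqD_vm.
    + eapply Rep_cast; [| | |apply (clos_m Sc Sc); [auto|apply HPm_c|exact IHk]]; lia.
Qed.

Lemma HPv_S0 : forall k1 k2 k3, S0 k1 k2 k3 -> inF (k1+k2+k3) k1 k2 k3 = true ->
  Rep S0 (S (k1+k2+k3)) (S (S (k1+2*k2+2*k3))) (S (S (k1+2*k2))) (Dv (Tk k1 k2 k3)).
Proof.
  intros k1 k2 k3 H0 HF. unfold S0 in H0; subst k1. apply inF_cases in HF as [_ [-> | [-> Hk3]]].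
  - apply (Rep_single S0 _ _ _ 0 (S k2) 0). reflexivity. apply idxg_spec. lia. lia.
  - destruct k3 as [|k]. lia.
    castr (X3 k). intros a b c [Ha _]; exact Ha.
Qed.

Lemma HPm_a j : Rep S0 (S j) (S (S (2 * j))) (2 * j) (Dm (Tk 0 j 0)).
Proof.
  induction j.
  - apply (Rep_single S0 _ _ _ 0 0 1). reflexivity. apply idxg_spec. lia. lia.
  - apply (Rep_ext _ _ _ _ (Dv (Dm (Tk 0 j 0)))).
    + apply EqD_vm.
    + eapply Rep_cast; [| | |apply (clos_v S0 S0); [auto|apply HPv_S0|exact IHj]]; lia.
Qed.

Lemma HPm_S0 : forall k1 k2 k3, S0 k1 k2 k3 -> inF (k1+k2+k3) k1 k2 k3 = true ->
  Rep S0 (S (k1+k2+k3)) (S (S (k1+2*k2+2*k3))) (k1+2*k2) (Dm (Tk k1 k2 k3)).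
Proof.
  intros k1 k2 k3 H0 HF. unfold S0 in H0; subst k1. apply inF_cases in HF as [_ [-> | [-> Hk3]]].
  - eapply Rep_cast; [| | |apply HPm_a]; lia.
  - apply (Rep_single S0 _ _ _ 0 0 (S k3)). reflexivity. apply idxg_spec. lia. lia.
Qed.

Lemma X1 j : Rep S0 (j + 2) (2 * j + 2) (2 * j + 2) (Dt (Dt (Tk 0 j 0))).
Proof.
  induction j.
  - exact R1.
  - apply (Rep_ext _ _ _ _ (Dv (Dt (Dt (Tk 0 j 0))))).
    + apply EqD_sym. eapply EqD_trans. apply EqD_Dt. apply EqD_tv. apply EqD_tv.
    + eapply Rep_cast; [| | |apply (clos_v S0 S0); [auto|apply HPv_S0|exact IHj]]; lia.
Qed.

Lemma X2 k : Rep S0 (k + 2) (2 * k + 2) 2 (Dt (Dt (Tk 0 0 k))).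
Proof.
  induction k.
  - exact R1.
  - apply (Rep_ext _ _ _ _ (Dm (Dt (Dt (Tk 0 0 k))))).
    + apply EqD_sym. eapply EqD_trans. apply EqD_Dt. apply EqD_tm. apply EqD_tm.
    + eapply Rep_cast; [| | |apply (clos_m S0 S0); [auto|apply HPm_S0|exact IHk]]; lia.
Qed.

Lemma S0_Sall a b c : S0 a b c -> Sall a b c.
Proof. intros; exact I. Qed.

Lemma HPt_all : forall k1 k2 k3, Sall k1 k2 k3 -> inF (k1+k2+k3) k1 k2 k3 = true ->
  Rep Sall (S (k1+k2+k3)) (S (k1+2*k2+2*k3)) (S (k1+2*k2)) (Dt (Tk k1 k2 k3)).
Proof.
  intros k1 k2 k3 _ HF. apply inF_cases in HF as [H1 H3].
  destruct k1 as [|[|k1]]; [| |lia].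
  - destruct H3 as [-> | [-> Hk3]].
    + apply (Rep_single Sall _ _ _ 1 k2 0). exact I. apply idxg_spec. lia. lia.
    + apply (Rep_single Sall _ _ _ 1 0 k3). exact I. apply idxg_spec. lia. lia.
  - destruct H3 as [-> | [-> Hk3]].
    + castr (X1 k2).
    + castr (X2 k3).
Qed.

Lemma HPt_c : forall k1 k2 k3, Sc k1 k2 k3 -> inF (k1+k2+k3) k1 k2 k3 = true ->
  Rep Sall (S (k1+k2+k3)) (S (k1+2*k2+2*k3)) (S (k1+2*k2)) (Dt (Tk k1 k2 k3)).
Proof. intros. apply HPt_all; auto. exact I. Qed.

Lemma HPv_all : forall k1 k2 k3, Sall k1 k2 k3 -> inF (k1+k2+k3) k1 k2 k3 = true ->
  Rep Sall (S (k1+k2+k3)) (S (S (k1+2*k2+2*k3))) (S (S (k1+2*k2))) (Dv (Tk k1 k2 k3)).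
Proof.
  intros k1 k2 k3 _ HF. pose proof HF as HF'. apply inF_cases in HF as [H1 H3].
  destruct k1 as [|[|k1]]; [| |lia].
  - castr (HPv_S0 0 k2 k3 eq_refl HF').
  - destruct H3 as [-> | [-> Hk3]].
    + apply (Rep_ext _ _ _ _ (Dt (Dv (Tk 0 k2 0)))). apply EqD_tv.
      apply (Rep_single Sall _ _ _ 1 (S k2) 0). exact I. apply idxg_spec. lia. lia.
    + apply (Rep_ext _ _ _ _ (Dt (Dv (Tk 0 0 k3)))). apply EqD_tv.
      destruct k3 as [|k]. lia.
      eapply Rep_cast; [| | |apply (clos_t Sc Sall); [apply HPt_c|apply (X3 k)]]; lia.
Qed.

Lemma main_rep a1 a2 a3 : Rep Sall (a1 + a2 + a3) (a1 + 2 * a2 + 2 * a3) (a1 + 2 * a2) (Tk a1 a2 a3).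
Proof.
  assert (H3 : Rep Sall a3 (2 * a3) 0 (Tk 0 0 a3)).
  { apply (Rep_single Sall _ _ _ 0 0 a3). exact I. apply idxg_spec.
    unfold inF. split. lia. split. lia. split. destruct a3; [left|right]; lia. lia. lia. }
  assert (H2 : Rep Sall (a2 + a3) (2 * a2 + 2 * a3) (2 * a2) (Tk 0 a2 a3)).
  { induction a2. exact H3.
    unfold Tk in *. simpl Nat.iter at 1.
    eapply Rep_cast; [| | |apply (clos_v Sall Sall); [auto|apply HPv_all|exact IHa2]]; lia. }
  induction a1. exact H2.
  unfold Tk in *. simpl Nat.iter at 1.
  eapply Rep_cast; [| | |apply (clos_t Sall Sall); [apply HPt_all|exact IHa1]]; lia.
Qed.


Definition rel x (F : R -> R -> R -> R) (T : list mono) :=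
  forall t v m, 0 < v -> F t v m = evalT x t v m T.

Lemma link_t x F T : rel x F T -> rel x (d_theta F) (Dt T).
Proof.
  intros E t v m Hv. unfold d_theta. apply Dpt_eq.
  apply (loc_der (fun y => evalT x y v m T) (fun y => F y v m) _ _ 1). lra.
  intros; symmetry; apply E; auto. now apply Dt_T.
Qed.
Lemma link_v x F T : rel x F T -> rel x (d_v F) (Dv T).
Proof.
  intros E t v m Hv. unfold d_v. apply Dpt_eq.
  apply (loc_der (fun y => evalT x t y m T) (fun y => F t y m) _ _ v). lra.
  intros z Hz; symmetry; apply E; auto. apply Rabs_def2 in Hz. lra. now apply Dv_T.
Qed.
Lemma link_m x F T : rel x F T -> rel x (d_m F) (Dm T).
Proof.
  intros E t v m Hv. unfold d_m. apply Dpt_eq.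
  apply (loc_der (fun y => evalT x t v y T) (fun y => F t v y) _ _ 1). lra.
  intros; symmetry; apply E; auto. now apply Dm_T.
Qed.
Lemma link_iter x n (op : (R -> R -> R -> R) -> (R -> R -> R -> R)) (Dop : list mono -> list mono) F T :
  (forall F T, rel x F T -> rel x (op F) (Dop T)) -> rel x F T -> rel x (Nat.iter n op F) (Nat.iter n Dop T).
Proof. intros H E. induction n; simpl; auto. Qed.

Lemma link_base x : rel x (skewf x) t0.
Proof.
  intros t v m Hv. unfold skewf, t0, evalT, evalM, Ker, EA, PA, phi, cst. simpl. unfold Rdiv. ring.
Qed.

Lemma link a1 a2 a3 x : rel x (pderiv a1 a2 a3 (skewf x)) (Tk a1 a2 a3).
Proof.
  unfold pderiv, Tk. apply link_iter. apply link_t.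
  apply link_iter. apply link_v. apply link_iter. apply link_m. apply link_base.
Qed.

Definition keq (a b c k1 k2 k3 : nat) : bool := (a =? k1)%nat && (b =? k2)%nat && (c =? k3)%nat.

Fixpoint grp (L : list entry) (k1 k2 k3 : nat) : rpoly * rpoly :=
  match L with
  | nil => (nil, 1 :: nil)
  | En a b c P H d :: L' =>
      let (Pa, Ha) := grp L' k1 k2 k3 in
      if keq a b c k1 k2 k3 then (padd (pmul P Ha) (pmul Pa H), pmul H Ha) else (Pa, Ha)
  end.

Fixpoint coefL (L : list entry) (k1 k2 k3 : nat) (v m : R) : R :=
  match L with
  | nil => 0
  | En a b c P H d :: L' => (if keq a b c k1 k2 k3 then cval P H d v m else 0) + coefL L' k1 k2 k3 v m
  end.

Lemma keq_true a b c k1 k2 k3 : keq a b c k1 k2 k3 = true -> a = k1 /\ b = k2 /\ c = k3.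
Proof. unfold keq. rewrite !andb_true_iff, !Nat.eqb_eq. tauto. Qed.

Lemma grp_val Sp r w e L k1 k2 k3 v m : List.Forall (good Sp r w e) L -> m <> 0 ->
  peval (snd (grp L k1 k2 k3)) m <> 0 /\
  peval (fst (grp L k1 k2 k3)) m / peval (snd (grp L k1 k2 k3)) m * (/ v) ^ ((e - k1 - 2 * k2) / 2)
   = coefL L k1 k2 k3 v m.
Proof.
  intros F Hm. remember ((e - k1 - 2 * k2) / 2)%nat as dk eqn:Hdk.
  induction F as [|[a b c P H d] L G F IH]; simpl.
  - split. lra. unfold Rdiv. ring.
  - destruct (grp L k1 k2 k3) as [Pa Ha]. simpl in IH. destruct IH as [IH1 IH2].
    simpl in G. destruct G as (_ & _ & He & HH).
    destruct (keq a b c k1 k2 k3) eqn:K.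
    + apply keq_true in K as (-> & -> & ->). simpl.
      replace dk with d in *.
      2:{ rewrite Hdk. replace (e - k1 - 2 * k2)%nat with (d * 2)%nat by lia. now rewrite Nat.div_mul. }
      pose proof (HH m Hm).
      rewrite peval_mul. split. apply Rmult_integral_contrapositive; auto.
      rewrite <- IH2. unfold cval. rewrite peval_add, !peval_mul. field. auto.
    + simpl. split; auto. rewrite IH2. ring.
Qed.

Lemma sum_zero f N : (forall k, (k <= N)%nat -> f k = 0) -> sum_f_R0 f N = 0.
Proof.
  intro H. induction N; simpl. apply H; lia.
  rewrite IHN. rewrite H. ring. lia. intros; apply H; lia.
Qed.

Lemma sum_delta f N k0 : (k0 <= N)%nat -> (forall k, k <> k0 -> f k = 0) -> sum_f_R0 f N = f k0.
Proof.
  intros Hk H. induction N; simpl.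
  - replace k0 with 0%nat by lia. reflexivity.
  - destruct (Nat.eq_dec k0 (S N)) as [->|Hne].
    + rewrite sum_zero. ring. intros k Hk'. apply H. lia.
    + rewrite IHN by lia. rewrite (H (S N)) by auto. ring.
Qed.

Lemma sum_ext f g N : (forall k, (k <= N)%nat -> f k = g k) -> sum_f_R0 f N = sum_f_R0 g N.
Proof.
  intro H. induction N; simpl. apply H; lia.
  rewrite IHN. rewrite H. ring. lia. intros; apply H; lia.
Qed.

Lemma sum_add f g N : sum_f_R0 (fun k => f k + g k) N = sum_f_R0 f N + sum_f_R0 g N.
Proof. induction N; simpl. ring. rewrite IHN. ring. Qed.

Definition tsum r (g : nat -> nat -> nat -> R) : R :=
  sum_f_R0 (fun k1 => sum_f_R0 (fun k2 => sum_f_R0 (fun k3 => g k1 k2 k3) r) r) 1.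

Lemma tsum_add r f g : tsum r (fun a b c => f a b c + g a b c) = tsum r f + tsum r g.
Proof.
  unfold tsum. rewrite <- sum_add. apply sum_ext; intros.
  rewrite <- sum_add. apply sum_ext; intros. apply sum_add.
Qed.

Lemma tsum_delta r g a b c : (a <= 1)%nat -> (b <= r)%nat -> (c <= r)%nat ->
  (forall k1 k2 k3, keq a b c k1 k2 k3 = false -> g k1 k2 k3 = 0) -> tsum r g = g a b c.
Proof.
  intros Ha Hb Hc H. unfold tsum. rewrite (sum_delta _ _ a); auto.
  rewrite (sum_delta _ _ b); auto. apply sum_delta; auto.
  - intros k Hk. apply H. unfold keq. rewrite !Nat.eqb_refl. simpl. apply Nat.eqb_neq. auto.
  - intros k Hk. apply sum_zero. intros. apply H. unfold keq. rewrite Nat.eqb_refl.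
    replace (b =? k)%nat with false. now rewrite andb_false_r. symmetry. apply Nat.eqb_neq. auto.
  - intros k Hk. apply sum_zero. intros. apply sum_zero. intros. apply H. unfold keq.
    replace (a =? k)%nat with false. reflexivity. symmetry. apply Nat.eqb_neq. auto.
Qed.

Lemma tsum_coef Sp r w e L x t v m (ix : nat -> nat -> nat -> bool) :
  List.Forall (good Sp r w e) L -> (forall k1 k2 k3, idxg r w k1 k2 k3 = true -> ix k1 k2 k3 = true) ->
  tsum r (fun k1 k2 k3 => if ix k1 k2 k3 then coefL L k1 k2 k3 v m * evalT x t v m (Tk k1 k2 k3) else 0)
  = evalL x t v m L.
Proof.
  intros F Hix. induction F as [|[a b c P H d] L G F IH]; simpl.
  - unfold tsum. apply sum_zero. intros. apply sum_zero. intros. apply sum_zero. intros.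
    destruct (ix _ _ _); ring.
  - rewrite <- IH.
    simpl in G. destruct G as (_ & Hi & _ & _).
    pose proof (Hix _ _ _ Hi) as Hi'. apply idxg_spec in Hi.
    assert (E : forall k1 k2 k3, (if ix k1 k2 k3 then ((if keq a b c k1 k2 k3 then cval P H d v m else 0) + coefL L k1 k2 k3 v m) * evalT x t v m (Tk k1 k2 k3) else 0)
       = (if ix k1 k2 k3 then (if keq a b c k1 k2 k3 then cval P H d v m else 0) * evalT x t v m (Tk k1 k2 k3) else 0)
         + (if ix k1 k2 k3 then coefL L k1 k2 k3 v m * evalT x t v m (Tk k1 k2 k3) else 0)).
    { intros. destruct (ix k1 k2 k3); ring. }
    transitivity (tsum r (fun k1 k2 k3 => (if ix k1 k2 k3 then (if keq a b c k1 k2 k3 then cval P H d v m else 0) * evalT x t v m (Tk k1 k2 k3) else 0)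
         + (if ix k1 k2 k3 then coefL L k1 k2 k3 v m * evalT x t v m (Tk k1 k2 k3) else 0))).
    { unfold tsum. apply sum_ext; intros. apply sum_ext; intros. apply sum_ext; intros. apply E. }
    rewrite tsum_add. f_equal.
    rewrite (tsum_delta r _ a b c); try lia.
    + unfold keq. rewrite Hi', !Nat.eqb_refl. reflexivity.

    + intros k1 k2 k3 K. rewrite K. destruct (ix k1 k2 k3); ring.
Qed.

Theorem lemma4p2 :
  forall a1 a2 a3 : nat,
  exists (P H Q : nat -> nat -> nat -> rpoly),
    (forall k1 k2 k3, idx a1 a2 a3 k1 k2 k3 = true ->
       (forall m, m <> 0 -> peval (H k1 k2 k3) m <> 0) /\
       (forall v, 0 < v -> peval (Q k1 k2 k3) v <> 0)) /\
    (forall x theta v m, 0 < v -> m <> 0 ->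
       pderiv a1 a2 a3 (skewf x) theta v m =
       idx_sum a1 a2 a3 (fun k1 k2 k3 =>
         peval (P k1 k2 k3) m / (peval (H k1 k2 k3) m * peval (Q k1 k2 k3) v)
         * pderiv k1 k2 k3 (skewf x) theta v m)).
Proof.
  intros a1 a2 a3. destruct (main_rep a1 a2 a3) as [L [F E]].
  exists (fun k1 k2 k3 => fst (grp L k1 k2 k3)), (fun k1 k2 k3 => snd (grp L k1 k2 k3)),
    (fun k1 k2 k3 => Qpoly ((a1 + 2 * a2 - k1 - 2 * k2) / 2)).
  split.
  - intros k1 k2 k3 _. split.
    + intros m Hm. exact (proj1 (grp_val _ _ _ _ L k1 k2 k3 0 m F Hm)).
    + intros v Hv. rewrite peval_Qpoly. apply pow_nonzero. lra.
  - intros x t v m Hv Hm. rewrite (link a1 a2 a3 x t v m Hv), E by auto.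
    rewrite <- (tsum_coef Sall _ _ _ L x t v m (idx a1 a2 a3) F) by (intros; assumption).
    unfold idx_sum, tsum. apply sum_ext; intros. apply sum_ext; intros. apply sum_ext; intros.
    destruct (idx a1 a2 a3 _ _ _); [|reflexivity].
    rewrite (link _ _ _ x t v m Hv). f_equal.
    destruct (grp_val _ _ _ _ L k k0 k1 v m F Hm) as [G1 G2].
    rewrite <- G2, peval_Qpoly. unfold Rdiv. rewrite Rinv_mult, pow_inv. ring.
Qed.
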